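(* Let $n\ge2$ and $j\in[n]$. For every integer $m\ge2$, $r(m,n)\le r(m+1,n)$ and $R_j(m,n)\subseteq R_j(m+1,n)$.
   Context: General product of dimension-$n$ tensors: for $\mathbb{A}$ of order $m\ge2$ and $\mathbb{B}$ of order $k\ge1$, $(\mathbb{A}\mathbb{B})_{i\alpha_1\ldots\alpha_{m-1}}=\sum_{i_2,\ldots,i_m=1}^n a_{ii_2\ldots i_m}b_{i_2\alpha_1}\cdots b_{i_m\alpha_{m-1}}$ ($\alpha_l\in[n]^{k-1}$); it is associative and $\mathbb{A}^k$ denotes the $k$-fold power. The majorization matrix is $(M(\mathbb{C}))_{ij}=c_{ij\ldots j}$. A nonnegative tensor $\mathbb{A}$ is primitive if $M(\mathbb{A}^r)>0$ entrywise for some $r\ge1$. For $j\in[n]$, $\mathbb{A}$ is $j$-primitive if there is $k\ge1$ with $(M(\mathbb{A}^k))_{uj}>0$ for all $u\in[n]$; the least such $k$ is $\gamma_j(\mathbb{A})$. $r(m,n)$ is the maximum of $\gamma_j(\mathbb{A})$ over all nonnegative, non-primitive tensors $\mathbb{A}$ of order $m$ and dimension $n$ and all $j\in[n]$ such that $\mathbb{A}$ is $j$-primitive. $R_j(m,n)$ is the set of integers $k$ such that there exists a nonnegative, non-primitive tensor $\mathbb{A}$ of order $m$ and dimension $n$ that is $j$-primitive with $\gamma_j(\mathbb{A})=k$. *)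

(* Defs.v *)
From HB Require Import structures.
From mathcomp Require Import all_boot all_order all_algebra.
From mathcomp Require Import reals.
Set Implicit Arguments. Unset Strict Implicit. Unset Printing Implicit Defensive.
Import Order.TTheory GRing.Theory Num.Theory.
Local Open Scope ring_scope.

Section Tensors.
Variables (R : realType) (n : nat).

Definition tensor (m : nat) := {ffun m.-tuple 'I_n -> R}.

(* Entry lookup by a list of indices (0 if the list has the wrong length;
   only used with lists of the right length below). *)
Definition ent (m : nat) (A : tensor m) (s : seq 'I_n) : R :=
  if insub s is Some t then A t else 0.

(* General product: for A of order m and B of order k,
   (AB)_{i a_1 .. a_{m-1}} = sum_{i_2..i_m} a_{i i_2 .. i_m} b_{i_2 a_1} ... b_{i_m a_{m-1}},
   with a_l in [n]^{k-1}; the result has order (m-1)(k-1)+1. *)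
Definition tmul (m k : nat) (A : tensor m) (B : tensor k) :
    tensor ((m.-1) * (k.-1)).+1 :=
  [ffun s => let i := thead s in
     let chunks := reshape (nseq m.-1 k.-1) (behead s) in
     \sum_(t : (m.-1).-tuple 'I_n)
        ent A (i :: t) * \prod_(l < m.-1) ent B (tnth t l :: nth [::] chunks l)].

(* tpow_aux A k = A^(k+1), with A^(k+1) = A A^k. *)
Fixpoint tpow_aux (m : nat) (A : tensor m) (k : nat) : {o : nat & tensor o} :=
  match k with
  | 0 => existT _ m A
  | k'.+1 => let P := tpow_aux A k' in existT _ _ (tmul A (projT2 P))
  end.

Definition tpow (m : nat) (A : tensor m) (k : nat) : {o : nat & tensor o} :=
  tpow_aux A k.-1.

Definition majmx (o : nat) (C : tensor o) : 'M[R]_n :=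
  \matrix_(i, j) ent C (i :: nseq o.-1 j).

Definition Mpow (m : nat) (A : tensor m) (k : nat) : 'M[R]_n :=
  majmx (projT2 (tpow A k)).

Definition nonneg_tensor (m : nat) (A : tensor m) : Prop :=
  forall t, 0 <= A t.

Definition primitive (m : nat) (A : tensor m) : Prop :=
  exists r : nat, (1 <= r)%N /\ forall i j, 0 < Mpow A r i j.

Definition jpos (m : nat) (A : tensor m) (j : 'I_n) (k : nat) : Prop :=
  (1 <= k)%N /\ forall u, 0 < Mpow A k u j.

Definition j_primitive (m : nat) (A : tensor m) (j : 'I_n) : Prop :=
  exists k, jpos A j k.

Definition gamma_is (m : nat) (A : tensor m) (j : 'I_n) (k : nat) : Prop :=
  jpos A j k /\ forall k', (1 <= k')%N -> (k' < k)%N -> ~ jpos A j k'.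

Definition Rj (m : nat) (j : 'I_n) (k : nat) : Prop :=
  exists A : tensor m, [/\ nonneg_tensor A, ~ primitive A, j_primitive A j
                         & gamma_is A j k].

Definition r_is (m : nat) (v : nat) : Prop :=
  (exists j, Rj m j v) /\ (forall j k, Rj m j k -> (k <= v)%N).

End Tensors.

(* Main.v *)
Require Import Defs.
From HB Require Import structures.
From mathcomp Require Import all_boot all_order all_algebra.
From mathcomp Require Import reals.
Set Implicit Arguments. Unset Strict Implicit. Unset Printing Implicit Defensive.
Import Order.TTheory GRing.Theory Num.Theory.
Local Open Scope ring_scope.

Section Aux.
Variables (R : realType) (n : nat).

Lemma ent_tup m (A : tensor R n m) (t : m.-tuple 'I_n) : ent A t = A t.
Proof. by rewrite /ent valK. Qed.

Lemma ent_ge0 m (A : tensor R n m) s : nonneg_tensor A -> 0 <= ent A s.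
Proof. by move=> HA; rewrite /ent; case: insub. Qed.

Lemma reshape_nseq (T : Type) a b (x : T) :
  reshape (nseq a b) (nseq (a * b) x) = nseq a (nseq b x).
Proof.
elim: a => [|a IH] //=.
by rewrite mulSn nseqD take_size_cat ?size_nseq // drop_size_cat ?size_nseq // IH.
Qed.

Lemma majmx_tmul m k (A : tensor R n m) (B : tensor R n k) i j :
  majmx (tmul A B) i j =
  \sum_(t : (m.-1).-tuple 'I_n) ent A (i :: t) *
      \prod_(l < m.-1) majmx B (tnth t l) j.
Proof.
rewrite /majmx !mxE.
have Hs : size (i :: nseq (m.-1 * k.-1) j) == (m.-1 * k.-1).+1.
  by rewrite /= size_nseq.
rewrite /ent (_ : i :: nseq (m.-1 * k.-1) j = tval (Tuple Hs)) // valK ffunE.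
apply: eq_bigr => t _.
have -> : thead (Tuple Hs) = i.
  by rewrite /thead (tnth_nth i).
congr (_ * _); apply: eq_bigr => l _.
rewrite mxE /= reshape_nseq nth_nseq ltn_ord.
done.
Qed.

Lemma Mpow_S m (A : tensor R n m) k : (0 < k)%N ->
  Mpow A k.+1 = majmx (tmul A (projT2 (tpow A k))).
Proof. by case: k. Qed.

Lemma Mpow_ge0 m (A : tensor R n m) : nonneg_tensor A ->
  forall k i j, 0 <= Mpow A k i j.
Proof.
move=> HA; elim=> [|k IH] i j.
  by rewrite /Mpow /majmx mxE ent_ge0.
case: k IH => [|k] IH; first by rewrite /Mpow /majmx mxE ent_ge0.
rewrite Mpow_S // majmx_tmul; apply: sumr_ge0 => t _.
by apply: mulr_ge0; [apply: ent_ge0|apply: prodr_ge0 => l _; apply: IH].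
Qed.

Lemma pos_step m (A : tensor R n m) (M : 'M[R]_n) i j :
  nonneg_tensor A -> (forall u, 0 <= M u j) ->
  (0 < \sum_(t : (m.-1).-tuple 'I_n) ent A (i :: t) *
      \prod_(l < m.-1) M (tnth t l) j) <->
  exists s : seq 'I_n, [/\ size s == m.-1, 0 < ent A (i :: s)
                        & all (fun u => 0 < M u j) s].
Proof.
move=> HA HM; split.
  move=> Hpos.
  have [t /andP [_ Ht]] : exists t : (m.-1).-tuple 'I_n, true && (0 < ent A (i :: t) *
      \prod_(l < m.-1) M (tnth t l) j).
    apply: psumr_neq0P; last by apply/eqP; rewrite gt_eqF.
    move=> t _; apply: mulr_ge0; [exact: ent_ge0|exact: prodr_ge0].
  have : (ent A (i :: t) * \prod_(l < m.-1) M (tnth t l) j) != 0.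
    by rewrite gt_eqF.
  rewrite mulf_eq0 negb_or => /andP [Ha Hp].
  exists (val t); split; first by rewrite size_tuple.
    by rewrite lt_def Ha ent_ge0.
  apply/allP => u /tnthP [l ->].
  move/prodf_neq0: Hp => /(_ l isT) Hl.
  by rewrite lt_def Hl HM.
case=> s [Hs Ha Hall].
rewrite (bigD1 (Tuple Hs)) //=.
have H1 : 0 < ent A (i :: s) * \prod_(l < m.-1) M (tnth (Tuple Hs) l) j.
  apply: mulr_gt0 => //; apply: prodr_gt0 => l _.
  by move/allP: Hall; apply; apply: mem_tnth.
have H2 : 0 <= \sum_(t | t != Tuple Hs) ent A (i :: t) *
      \prod_(l < m.-1) M (tnth t l) j.
  apply: sumr_ge0 => t _; apply: mulr_ge0; [exact: ent_ge0|exact: prodr_ge0].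
exact: ltr_wpDr.
Qed.
End Aux.

Section Lift.
Variables (R : realType) (n p : nat) (A : tensor R n p.+2).
Hypothesis HA : nonneg_tensor A.

Definition liftA : tensor R n p.+3 := [ffun t : p.+3.-tuple 'I_n => ent A (take p.+2 t)].

Lemma liftA_ge0 : nonneg_tensor liftA.
Proof. by move=> t; rewrite ffunE ent_ge0. Qed.

Lemma ent_liftA i (s : seq 'I_n) : size s = p.+2 ->
  ent liftA (i :: s) = ent A (i :: take p.+1 s).
Proof.
move=> Hs; have Hs' : size (i :: s) == p.+3 by rewrite /= Hs.
by rewrite (_ : i :: s = tval (Tuple Hs')) // ent_tup ffunE.
Qed.

Lemma liftA_pos k i j : (0 < k)%N ->
  (0 < Mpow liftA k i j) = (0 < Mpow A k i j).
Proof.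
elim: k i => [|k IH] i // _.
case: k IH => [|k] IH.
  rewrite /Mpow /= /majmx !mxE ent_liftA ?size_nseq //.
  by rewrite take_nseq.
have IH' := IH^~ isT.
rewrite !Mpow_S // !majmx_tmul.
apply/idP/idP.
  move=> /pos_step [] //; first exact: liftA_ge0.
    by move=> u; apply: Mpow_ge0 liftA_ge0 _ _ _.
  move=> s [Hs Ha Hall]; apply/pos_step => //.
    by move=> u; apply: Mpow_ge0.
  move/eqP: Hs => Hs.
  exists (take p.+1 s); split.
  - by rewrite size_take Hs ltnSn.
  - by rewrite -ent_liftA.
  - apply/allP => u /mem_take Hu; move/allP: Hall => /(_ u Hu).
    by rewrite /= -/(Mpow liftA k.+1 u j) IH'.
move=> /pos_step [] //; first by move=> u; apply: Mpow_ge0.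
move=> s [Hs Ha Hall]; apply/pos_step => //.
- exact: liftA_ge0.
- by move=> u; apply: Mpow_ge0 liftA_ge0 _ _ _.
move/eqP: Hs => Hs.
case: s Hs Ha Hall => [|x s] // Hs Ha Hall.
exists (rcons (x :: s) x); split.
- by rewrite size_rcons Hs.
- by rewrite ent_liftA ?size_rcons ?Hs // -cats1 take_size_cat.
- rewrite all_rcons; apply/andP; split.
    by rewrite /= -/(Mpow liftA k.+1 x j) IH'; move/andP: Hall => [].
  apply/allP => u Hu; move/allP: Hall => /(_ u Hu).
  by rewrite /= -/(Mpow liftA k.+1 u j) IH'.
Qed.
End Lift.

Lemma Rj_lift (R : realType) (n p : nat) (j : 'I_n) k :
  Rj R p.+2 j k -> Rj R p.+3 j k.
Proof.
case=> A [HA Hnp Hjp [Hg Hmin]].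
have Hj : forall k, jpos (liftA A) j k <-> jpos A j k.
  move=> k'; split; case=> Hk H; split => // u.
    by rewrite -liftA_pos.
  by rewrite liftA_pos.
exists (liftA A); split.
- exact: liftA_ge0.
- case=> r [Hr H]; apply: Hnp; exists r; split => // i j'.
  by rewrite -liftA_pos.
- by case: Hjp => k' /Hj ?; exists k'.
- split; first by apply/Hj.
  by move=> k' H1 H2 /Hj; apply: Hmin.
Qed.

Theorem proposition4p10 (R : realType) (n : nat) (j : 'I_n) (m : nat) :
  (2 <= n)%N -> (2 <= m)%N ->
  (forall v w : nat, r_is R n m v -> r_is R n m.+1 w -> (v <= w)%N) /\
  (forall k : nat, Rj R m j k -> Rj R m.+1 j k).
Proof.
move=> _; case: m => [|[|p]] // _; split.
  move=> v w [[j0 Hv] _] [_ Hw].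
  by apply: (Hw j0); apply: Rj_lift.
by move=> k; apply: Rj_lift.
Qed.
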